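(* Let $T$ be a left-linear term rewriting system and $\psi$ a convergent proof term for $T$. Then (a) $tgt(\psi)$ is defined; and (b) for every $n<\omega$, if $mind(\psi)>n$ then $d(src(\psi),tgt(\psi))<2^{-n}$.
   Context: Setting. $T=(\Sigma,R)$: $\Sigma$ finite; rules $\mu: l\to r$ with $l$ finite, non-variable, linear, variables of $r$ among those of $l$; $r$ may be infinite. Terms are finite or infinite trees; $d(t,u)=0$ if $t=u$ and $2^{-k}$ otherwise, $k$ the least length of a position where $t$ and $u$ differ; limits are w.r.t. $d$. Multisteps. $\Sigma^R$ is $\Sigma$ plus a symbol $\mu$ of arity $n$ for each rule $\mu: l[x_1,..,x_n]\to r[x_1,..,x_n]$. A multistep is a closed finite or infinite term over $\Sigma^R$; $src$ = its normal form under $\mu(\vec x)\to l[\vec x]$, $tgt$ = its normal form (if any, via strongly convergent reduction) under $\mu(\vec x)\to r[\vec x]$; convergent iff $tgt$ defined; $mind=\omega$ if no rule symbol, else the least depth of a rule-symbol occurrence. Proof terms (over $\Sigma^R\cup\{\cdot/2\}$) with partial $src,tgt$, convergence and $mind$: the least set closed under (i) multisteps; (ii) $\psi_1\cdot\psi_2$ for $\psi_1$ convergent, $tgt(\psi_1)=src(\psi_2)$: $src=src(\psi_1)$, $tgt=tgt(\psi_2)$, convergent iff $\psi_2$ is, $mind=\min$; (iii) $\prod_{i<\omega}\psi_i=\psi_0\cdot(\psi_1\cdot\cdots)$ for convergent $\psi_i$ with $tgt(\psi_i)=src(\psi_{i+1})$: $src=src(\psi_0)$, $tgt=\lim_i tgt(\psi_i)$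 (undefined if no limit), $mind=\min_i mind(\psi_i)$, convergent iff for every $k$ there is $n$ with $mind(\psi_j)>k$ for $j>n$; (iv) $f(\psi_1,..,\psi_m)$, $f\in\Sigma$: $src,tgt$ componentwise, convergent iff all $\psi_i$ are, $mind=1+\min$; (v) $\mu(\psi_1,..,\psi_n)$: $src=l[src(\psi_1),..]$, $tgt=r[tgt(\psi_1),..]$, convergent iff $\psi_i$ convergent whenever $x_i$ occurs in $r$, $mind=0$. *)

(* Defs.v *)
From Stdlib Require Import Reals List Arith ClassicalEpsilon.
Import ListNotations.
Set Implicit Arguments.

(* A (possibly infinite) term over a symbol type S is given by its labelling
   function on positions; positions are lists of argument indices read from
   the root ([] = root, p ++ [i] = i-th child of p). *)
Definition tree (S : Type) := list nat -> option S.

Definition wf {S : Type} (ar : S -> nat) (t : tree S) : Prop :=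
  (exists s, t [] = Some s) /\
  forall p i, (exists s, t (p ++ [i]) = Some s) <-> (exists s, t p = Some s /\ i < ar s).

Definition subtree {S : Type} (t : tree S) (p : list nat) : tree S :=
  fun q => t (p ++ q).

Fixpoint strip_prefix (p q : list nat) : option (list nat) :=
  match p, q with
  | [], _ => Some q
  | i :: p', j :: q' => if Nat.eqb i j then strip_prefix p' q' else None
  | _ :: _, [] => None
  end.

Definition replace {S : Type} (t : tree S) (p : list nat) (u : tree S) : tree S :=
  fun q => match strip_prefix p q with Some r => u r | None => t q end.

Definition fun_tree {S : Type} (ar : S -> nat) (f : S) (us : nat -> tree S) : tree S :=
  fun p => match p with
           | [] => Some f
           | i :: p' => if Nat.ltb i (ar f) then us i p' else None
           end.

Fixpoint subst_aux {F S : Type} (t : tree (F + nat)) (sigma : nat -> tree S)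
  (emb : F -> S) (q p : list nat) : option S :=
  match t q with
  | None => None
  | Some (inr x) => sigma x p
  | Some (inl f) =>
      match p with
      | [] => Some (emb f)
      | i :: p' => subst_aux t sigma emb (q ++ [i]) p'
      end
  end.

Definition subst {F S : Type} (t : tree (F + nat)) (sigma : nat -> tree S)
  (emb : F -> S) : tree S := subst_aux t sigma emb [].

Definition differ_at {S : Type} (t u : tree S) (k : nat) : Prop :=
  exists p, length p = k /\ t p <> u p.

(* d(t,u) = 0 if t = u, 2^-k otherwise, k the least length of a position
   where t and u differ. *)
Definition tdist {S : Type} (t u : tree S) : R :=
  match excluded_middle_informative (exists k, differ_at t u k) with
  | left _ =>
      (/ 2) ^ (epsilon (inhabits 0%nat)
                 (fun k => differ_at t u k /\ forall j, (j < k)%nat -> ~ differ_at t u j))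
  | right _ => 0%R
  end.

Definition converges {S : Type} (ts : nat -> tree S) (u : tree S) : Prop :=
  forall eps : R, (0 < eps)%R ->
    exists N, forall i, (N <= i)%nat -> (tdist (ts i) u < eps)%R.

Definition var_ar {F : Type} (ar : F -> nat) (s : F + nat) : nat :=
  match s with inl f => ar f | inr _ => 0 end.

(* Convention: the variables of the
   left-hand side l of rule mu are exactly x_0, ..., x_{rar mu - 1}
   (written inr 0, ..., inr (rar mu - 1)), each occurring once (linearity). *)
Record TRS := {
  sym : Type;
  arity : sym -> nat;
  sym_finite : exists l : list sym, forall f, In f l;
  rule : Type;
  rar : rule -> nat;
  lhs : rule -> tree (sym + nat);
  rhs : rule -> tree (sym + nat);
  lhs_wf : forall mu, wf (var_ar arity) (lhs mu);
  rhs_wf : forall mu, wf (var_ar arity) (rhs mu);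
  lhs_finite : forall mu, exists ps : list (list nat),
      forall p, lhs mu p <> None -> In p ps;
  lhs_nonvar : forall mu, exists f, lhs mu [] = Some (inl f);
  lhs_vars : forall mu x, (exists p, lhs mu p = Some (inr x)) <-> x < rar mu;
  lhs_linear : forall mu x p q,
      lhs mu p = Some (inr x) -> lhs mu q = Some (inr x) -> p = q;
  rhs_vars : forall mu x p, rhs mu p = Some (inr x) -> x < rar mu
}.

Section ProofTerms.
Context (T : TRS).

Definition term := tree (sym T).
Definition mstree := tree (sym T + rule T).

Definition ms_ar (s : sym T + rule T) : nat :=
  match s with inl f => arity T f | inr mu => rar T mu end.

Definition is_multistep (m : mstree) : Prop := wf ms_ar m.

Definition embF (s : term) : mstree := fun p => option_map inl (s p).

(* one step of  mu(x_0..x_{n-1}) -> rho mu [x_0..x_{n-1}]  at position p *)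
Definition ms_step (rho : rule T -> tree (sym T + nat)) (p : list nat)
  (t t' : mstree) : Prop :=
  exists mu, t p = Some (inr mu) /\
    t' = replace t p (subst (rho mu) (fun i => subtree t (p ++ [i])) inl).

(* m reduces, by a strongly convergent reduction (of length <= omega), to
   the normal form s (a term without rule symbols). *)
Definition nf_reduct (rho : rule T -> tree (sym T + nat)) (m : mstree) (s : term)
  : Prop :=
  (exists (n : nat) (ts : nat -> mstree) (ps : nat -> list nat),
      ts 0 = m /\ (forall i, i < n -> ms_step rho (ps i) (ts i) (ts (S i))) /\
      ts n = embF s)
  \/
  (exists (ts : nat -> mstree) (ps : nat -> list nat),
      ts 0 = m /\ (forall i, ms_step rho (ps i) (ts i) (ts (S i))) /\
      (forall k, exists N, forall i, N <= i -> k <= length (ps i)) /\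
      converges ts (embF s)).

Definition ms_src (m : mstree) (s : term) : Prop := nf_reduct (lhs T) m s.
Definition ms_tgt (m : mstree) (u : term) : Prop := nf_reduct (rhs T) m u.

(* Syntax of proof terms; argument families are indexed by nat, only the
   indices below the arity are meaningful. PInf ps = prod_{i<omega} ps i. *)
Inductive pterm : Type :=
| PMs   : mstree -> pterm
| PComp : pterm -> pterm -> pterm
| PInf  : (nat -> pterm) -> pterm
| PFun  : sym T -> (nat -> pterm) -> pterm
| PRule : rule T -> (nat -> pterm) -> pterm.

Definition occurs_rhs (mu : rule T) (i : nat) : Prop :=
  exists p, rhs T mu p = Some (inr i).

(* mind_gt psi n  :<->  n < mind(psi)   (mind(psi) in omega + 1) *)
Fixpoint mind_gt (psi : pterm) (n : nat) : Prop :=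
  match psi with
  | PMs m => forall p mu, length p <= n -> m p <> Some (inr mu)
  | PComp p q => mind_gt p n /\ mind_gt q n
  | PInf ps => forall i, mind_gt (ps i) n
  | PFun f a => match n with
                | 0 => True
                | S n' => forall i, i < arity T f -> mind_gt (a i) n'
                end
  | PRule _ _ => False
  end.

Fixpoint conv (psi : pterm) : Prop :=
  match psi with
  | PMs m => exists u, ms_tgt m u
  | PComp p q => conv q
  | PInf ps => forall k, exists n, forall j, n < j -> mind_gt (ps j) k
  | PFun f a => forall i, i < arity T f -> conv (a i)
  | PRule mu a => forall i, occurs_rhs mu i -> conv (a i)
  end.

Inductive Src : pterm -> term -> Prop :=
| Src_ms m s : ms_src m s -> Src (PMs m) s
| Src_comp p q s : Src p s -> Src (PComp p q) s
| Src_inf ps s : Src (ps 0) s -> Src (PInf ps) s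
| Src_fun f a ss : (forall i, i < arity T f -> Src (a i) (ss i)) ->
    Src (PFun f a) (fun_tree (arity T) f ss)
| Src_rule mu a ss : (forall i, i < rar T mu -> Src (a i) (ss i)) ->
    Src (PRule mu a) (subst (lhs T mu) ss (fun f => f)).

Inductive Tgt : pterm -> term -> Prop :=
| Tgt_ms m u : ms_tgt m u -> Tgt (PMs m) u
| Tgt_comp p q u : Tgt q u -> Tgt (PComp p q) u
| Tgt_inf ps us u : (forall i, Tgt (ps i) (us i)) -> converges us u ->
    Tgt (PInf ps) u
| Tgt_fun f a us : (forall i, i < arity T f -> Tgt (a i) (us i)) ->
    Tgt (PFun f a) (fun_tree (arity T) f us)
| Tgt_rule mu a us : (forall i, occurs_rhs mu i -> Tgt (a i) (us i)) ->
    Tgt (PRule mu a) (subst (rhs T mu) us (fun f => f)).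

Fixpoint is_pterm (psi : pterm) : Prop :=
  match psi with
  | PMs m => is_multistep m
  | PComp p q => is_pterm p /\ is_pterm q /\ conv p /\
                 exists w, Tgt p w /\ Src q w
  | PInf ps => forall i, is_pterm (ps i) /\ conv (ps i) /\
                 exists w, Tgt (ps i) w /\ Src (ps (S i)) w
  | PFun f a => forall i, i < arity T f -> is_pterm (a i)
  | PRule mu a => forall i, i < rar T mu -> is_pterm (a i)
  end.

End ProofTerms.

(* Main.v *)
Require Import Defs.
From Stdlib Require Import Reals.
From Stdlib Require Import List Arith Lia Lra ClassicalEpsilon Classical.
Import ListNotations.

Definition agree {S : Type} (n : nat) (t u : tree S) : Prop :=
  forall p, (length p <= n)%nat -> t p = u p.

Lemma agree_refl {S} n (t : tree S) : agree n t t.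
Proof. intros p _; reflexivity. Qed.
Lemma agree_sym {S} n (t u : tree S) : agree n t u -> agree n u t.
Proof. intros H p Hp; symmetry; auto. Qed.
Lemma agree_trans {S} n (t v u : tree S) : agree n t v -> agree n v u -> agree n t u.
Proof. intros H1 H2 p Hp; rewrite H1; auto. Qed.

Lemma choice_nat {A : Type} (P : nat -> A -> Prop) :
  (forall i, exists u, P i u) -> exists g, forall i, P i (g i).
Proof.
  intro H. exists (fun i => proj1_sig (constructive_indefinite_description _ (H i))).
  intro i. exact (proj2_sig (constructive_indefinite_description _ (H i))).
Qed.

Lemma least_ex (P : nat -> Prop) :
  (exists k, P k) -> exists k, P k /\ forall j, (j < k)%nat -> ~ P j.
Proof.
  intros [k Hk]. revert Hk.
  induction k as [k IH] using (well_founded_induction lt_wf).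
  intro Hk.
  destruct (classic (exists j, (j < k)%nat /\ P j)) as [[j [Hj Pj]]|Hn].
  - exact (IH j Hj Pj).
  - exists k; split; auto. intros j Hj Pj; apply Hn; eauto.
Qed.

Lemma half_pow_lt n k : (n < k)%nat -> ((/2)^k < (/2)^n)%R.
Proof.
  intro H. rewrite !pow_inv. apply Rinv_lt_contravar.
  - apply Rmult_lt_0_compat; apply pow_lt; lra.
  - apply Rlt_pow; auto; lra.
Qed.

Lemma half_pow_le n k : (n <= k)%nat -> ((/2)^k <= (/2)^n)%R.
Proof.
  intro H. destruct (Nat.eq_dec n k).
  - subst; lra.
  - left; apply half_pow_lt; lia.
Qed.

Lemma tdist_agree {S} (t u : tree S) n : (tdist t u < (/2)^n)%R <-> agree n t u.
Proof.
  unfold tdist. destruct (excluded_middle_informative _) as [Hex|Hne].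
  - set (P := fun k => differ_at t u k /\ forall j, (j < k)%nat -> ~ differ_at t u j).
    destruct (epsilon_spec (inhabits 0%nat) P (least_ex _ Hex)) as [Hd Hmin].
    generalize dependent (epsilon (inhabits 0%nat) P). intros k0 Hd Hmin.
    split.
    + intro Hlt. assert (n < k0)%nat.
      { destruct (le_lt_dec k0 n); auto. exfalso.
        pose proof (half_pow_le _ _ l). lra. }
      intros p Hp. destruct (classic (t p = u p)); auto.
      exfalso; apply (Hmin (length p)); [lia| exists p; auto].
    + intro Ha. destruct Hd as [p [Hl Hne]].
      assert (n < k0)%nat.
      { destruct (le_lt_dec k0 n); [exfalso; apply Hne, Ha; lia | auto]. }
      apply half_pow_lt; auto.
  - split; intro H.
    + intros p Hp. destruct (classic (t p = u p)); auto.
      exfalso; apply Hne; exists (length p), p; auto.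
    + apply pow_lt; lra.
Qed.

Lemma conv_agree {S} (us : nat -> tree S) u :
  converges us u -> forall k, exists N, forall i, (N <= i)%nat -> agree k (us i) u.
Proof.
  intros H k. destruct (H ((/2)^k)%R) as [N HN].
  - apply pow_lt; lra.
  - exists N; intros i Hi; apply tdist_agree; auto.
Qed.

Lemma agree_conv {S} (us : nat -> tree S) u :
  (forall k, exists N, forall i, (N <= i)%nat -> agree k (us i) u) -> converges us u.
Proof.
  intros H eps Heps.
  destruct (pow_lt_1_zero (/2) ltac:(rewrite Rabs_right; lra) eps Heps) as [k Hk].
  destruct (H k) as [N HN]. exists N. intros i Hi.
  apply Rlt_trans with ((/2)^k)%R.
  - apply tdist_agree; auto.
  - specialize (Hk k (Nat.le_refl k)). rewrite Rabs_right in Hk; auto.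
    left; apply pow_lt; lra.
Qed.

Lemma cauchy_lim {S} (us : nat -> tree S) :
  (forall k, exists N, forall i j, (N <= i)%nat -> (N <= j)%nat -> agree k (us i) (us j)) ->
  exists u, converges us u.
Proof.
  intro H. destruct (choice_nat _ H) as [Nf HN].
  exists (fun p => us (Nf (length p)) p). apply agree_conv.
  intro k. exists (Nf k). intros i Hi p Hp. set (m := length p) in *.
  assert (A1 : agree m (us (Nf m)) (us (Nf m + Nf k)%nat)) by (apply HN; lia).
  assert (A2 : agree k (us i) (us (Nf m + Nf k)%nat)) by (apply HN; lia).
  rewrite (A2 p Hp). symmetry. apply A1. unfold m; lia.
Qed.

Lemma strip_none : forall p q, (length q < length p)%nat -> strip_prefix p q = None.
Proof.
  induction p; intros q H; simpl in *. lia.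
  destruct q; simpl in *; auto. destruct (Nat.eqb a n); auto. apply IHp; lia.
Qed.

Lemma step_keep T rho n p (t t' : mstree T) :
  (forall q mu, (length q <= n)%nat -> t q <> Some (inr mu)) ->
  ms_step rho p t t' -> agree n t t'.
Proof.
  intros Hno [mu [Hp ->]].
  assert (n < length p)%nat.
  { destruct (le_lt_dec (length p) n); auto. exfalso; eapply Hno; eauto. }
  intros q Hq. unfold replace. rewrite strip_none by lia. reflexivity.
Qed.

Lemma norule_transfer T n (m t : mstree T) :
  (forall q mu, (length q <= n)%nat -> m q <> Some (inr mu)) -> agree n m t ->
  (forall q mu, (length q <= n)%nat -> t q <> Some (inr mu)).
Proof. intros Hno Ha q mu Hq. rewrite <- (Ha q Hq). apply Hno; auto. Qed.

Lemma nf_agree T rho n (m : mstree T) s :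
  (forall q mu, (length q <= n)%nat -> m q <> Some (inr mu)) ->
  nf_reduct rho m s -> agree n m (embF s).
Proof.
  intros Hno [[k [ts [ps [H0 [Hs Hk]]]]] | [ts [ps [H0 [Hs [_ Hc]]]]]].
  - assert (Hall : forall i, (i <= k)%nat -> agree n m (ts i)).
    { induction i; intros Hi.
      - subst; apply agree_refl.
      - assert (A : agree n m (ts i)) by (apply IHi; lia).
        apply agree_trans with (ts i); auto.
        eapply step_keep; [ | apply Hs; lia].
        eapply norule_transfer; eauto. }
    rewrite <- Hk; apply Hall; lia.
  - assert (Hall : forall i, agree n m (ts i)).
    { induction i.
      - subst; apply agree_refl.
      - apply agree_trans with (ts i); auto.
        eapply step_keep; [ | apply Hs].
        eapply norule_transfer; eauto. }
    destruct (conv_agree _ _ Hc n) as [N HN].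
    apply agree_trans with (ts N); auto.
Qed.

Lemma emb_agree T n (s u : term T) : agree n (embF s) (embF u) -> agree n s u.
Proof.
  intros H p Hp. specialize (H p Hp). unfold embF in H.
  destruct (s p), (u p); simpl in H; congruence.
Qed.

Lemma main T (psi : pterm T) : is_pterm psi -> conv psi ->
  (exists u, Tgt psi u) /\
  (forall n s u, mind_gt psi n -> Src psi s -> Tgt psi u -> agree n s u).
Proof.
  induction psi as [m | p IHp q IHq | ps IH | f a IH | mu a IH]; simpl; intros Hpt Hc.
  - split.
    + destruct Hc as [u Hu]; exists u; constructor; auto.
    + intros n s u Hm Hs Hu. inversion Hs; subst. inversion Hu; subst.
      apply emb_agree. apply agree_trans with m.
      * apply agree_sym, (nf_agree _ (lhs T)); auto.
      * apply (nf_agree _ (rhs T)); auto.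
  - destruct Hpt as [Hp [Hq [Hcp [w [Hw1 Hw2]]]]].
    split.
    + destruct (IHq Hq Hc) as [[u Hu] _]; exists u; constructor; auto.
    + intros n s u [Hmp Hmq] Hs Hu. inversion Hs; subst. inversion Hu; subst.
      apply agree_trans with w.
      * eapply (proj2 (IHp Hp Hcp)); eauto.
      * eapply (proj2 (IHq Hq Hc)); eauto.
  - assert (IHa : forall i, exists u, Tgt (ps i) u).
    { intro i; destruct (Hpt i) as [A [B _]]; exact (proj1 (IH i A B)). }
    assert (IHb : forall i n s u, mind_gt (ps i) n -> Src (ps i) s -> Tgt (ps i) u -> agree n s u).
    { intro i; destruct (Hpt i) as [A [B _]]; exact (proj2 (IH i A B)). }
    destruct (choice_nat (fun i w => Tgt (ps i) w /\ Src (ps (S i)) w)) as [ws Hws].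
    { intro i; destruct (Hpt i) as [_ [_ E]]; exact E. }
    split.
    + destruct (choice_nat _ IHa) as [us Hus].
      assert (Step : forall k N, (forall j, (N < j)%nat -> mind_gt (ps j) k) ->
                forall j, (N < j)%nat -> agree k (us j) (us (S j))).
      { intros k N HN j Hj. destruct j as [|j']; [lia|].
        destruct (Hws j') as [_ Hs'].
        destruct (Hws (S j')) as [Ht Hs''].
        apply agree_trans with (ws j').
        - apply agree_sym. apply (IHb (S j')); [apply HN; lia | eauto | eauto].
        - apply agree_trans with (ws (S j')).
          + apply (IHb (S j')); [apply HN; lia | eauto | eauto].
          + apply (IHb (S (S j'))); [apply HN; lia | eauto | eauto]. }
      assert (Ca : forall k, exists N, forall i j, (N <= i)%nat -> (N <= j)%nat ->
                     agree k (us i) (us j)).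
      { intro k. destruct (Hc k) as [N HN]. exists (S N).
        assert (Mono : forall d i, (S N <= i)%nat -> agree k (us i) (us (i + d)%nat)).
        { induction d; intros i Hi.
          - rewrite Nat.add_0_r; apply agree_refl.
          - apply agree_trans with (us (i + d)%nat); auto.
            rewrite Nat.add_succ_r.
            apply (Step k N HN); lia. }
        intros i j Hi Hj. destruct (le_ge_dec i j).
        - replace j with (i + (j - i))%nat by lia. apply Mono; auto.
        - apply agree_sym. replace i with (j + (i - j))%nat by lia. apply Mono; auto. }
      destruct (cauchy_lim _ Ca) as [u Hu].
      exists u. econstructor; eauto.
    + intros n s u Hm Hs Hu.
      inversion Hs; subst. inversion Hu; subst.
      assert (Chain : forall i, exists si, Src (ps i) si /\ agree n s si).
      { induction i.
        - exists s; split; auto; apply agree_refl.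
        - destruct IHi as [si [Hsi Hag]]. exists (ws i).
          destruct (Hws i) as [Ht Hs'].
          split; auto. apply agree_trans with si; auto. eapply IHb; eauto. }
      match goal with H : converges ?us u |- _ =>
        destruct (conv_agree _ _ H n) as [N HN];
        destruct (Chain N) as [sN [HsN Hag]];
        apply agree_trans with (us N); [ apply agree_trans with sN; auto; eapply IHb; eauto | auto ]
      end.
  - split.
    + destruct (choice_nat (fun i u => (i < arity T f)%nat -> Tgt (a i) u)) as [us Hus].
      { intro i. destruct (lt_dec i (arity T f)) as [l|l].
        - destruct (IH i (Hpt i l) (Hc i l)) as [[u Hu] _]; eauto.
        - exists (fun _ => None); intros; lia. }
      exists (fun_tree (arity T) f us); constructor; auto.
    + intros n s u Hm Hs Hu. inversion Hs; subst. inversion Hu; subst.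
      destruct n as [|n].
      * intros pp Hpp; destruct pp; [reflexivity| simpl in Hpp; lia].
      * intros [|i pp] Hpp; simpl; [reflexivity|].
        destruct (Nat.ltb i (arity T f)) eqn:E; auto.
        apply Nat.ltb_lt in E.
        eapply (proj2 (IH i (Hpt i E) (Hc i E))); eauto. simpl in Hpp; lia.
  - split.
    + destruct (choice_nat (fun i u => occurs_rhs T mu i -> Tgt (a i) u)) as [us Hus].
      { intro i. destruct (classic (occurs_rhs T mu i)) as [l|l].
        - assert (Hl : (i < rar T mu)%nat) by (destruct l as [pp Hpp]; eapply rhs_vars; eauto).
          destruct (IH i (Hpt i Hl) (Hc i l)) as [[u Hu] _]; eauto.
        - exists (fun _ => None); intros; contradiction. }
      exists (subst (rhs T mu) us (fun f => f)); constructor; auto.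
    + intros n s u [].
Qed.

Theorem mainTheorem9 (T : TRS) (psi : pterm T) :
  is_pterm psi -> conv psi ->
  (exists u, Tgt psi u) /\
  (forall (n : nat) (s u : term T),
      mind_gt psi n -> Src psi s -> Tgt psi u -> (tdist s u < (/ 2) ^ n)%R).
Proof.
  intros H1 H2. destruct (main T psi H1 H2) as [A B]. split; auto.
  intros n s u Hm Hs Hu. apply tdist_agree. eauto.
Qed.
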